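(* Suppose Assumption 1 holds with parameters $\varepsilon,\alpha\in[1,\infty],k_1$ and a supergradient $g'(x^* )$ that moreover satisfies $g'(x^* )>0$. Then in the asymptotic regime there exist constants $K>0$ and $c_0$ (independent of $c$) such that for every $c\ge c_0$ there is a two-price policy with performance loss at most $K\,c^{1/(\alpha+1)}(\log c)^2$ if $\alpha\in[1,\infty)$, i.e. $\tilde O(c^{1/(\alpha+1)})$, and at most $K(\log c)^2$ if $\alpha=\infty$.
   Context: Setting. Fix $c\in\mathbb N$ (number of identical units of a single reusable resource), an arrival rate $\lambda>0$ and a mean usage duration $d>0$, with $x^*:=c/(\lambda d)\in(0,1)$. Let $g:[0,1]\to\mathbb R$ be concave, non-decreasing, with $g(0)=0$ (the reward function). A stock-dependent policy is a vector $\mathbf x=(x_1,\dots,x_c)\in[0,1]^c$, where $x_j$ is the admission probability used when exactly $j$ units are available (the admission probability is $0$ when no unit is available). Its steady-state distribution is the unique probability vector $\pi=(\pi_0,\dots,\pi_c)$ satisfying $\pi_j\lambda x_j=\pi_{j-1}(c-j+1)/d$ for all $j\in\{1,\dots,c\}$, and its long-run average reward is $\mathcal R(\mathbf x)=\sum_{j=1}^c\pi_j\lambda g(x_j)$. The performance loss of $\mathbf x$ is $\lambda g(x^* )-\mathcal R(\mathbf x)$. A two-price policy with parameters $x_L,x_H\in[0,1]$ and $\tau\in\{1,\dots,c\}$ sets $x_j=x_L$ for $1\le j\le\tau$ and $x_j=x_H$ for $\tau<j\le c$. Asymptotic regime: $x^*\in(0,1)$, $d$ and $g$ are fixed, $c\to\infty$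 and $\lambda=c/(x^*d)$. Assumption 1: there exist $0<\varepsilon<\min\{x^*,1-x^*\}$, $\alpha\in[1,\infty]$, $k_1\ge0$ and a supergradient $g'(x^* )\ge0$ of $g$ at $x^*$ such that $g(x)\ge g(x^* )+g'(x^* )(x-x^* )-k_1|x-x^*|^\alpha$ for all $x\in[x^*-\varepsilon,x^*+\varepsilon]$ (when $\alpha=\infty$, the term $|x-x^*|^\alpha$ is interpreted as $0$). *)

(* Defs.v *)
From Stdlib Require Import Reals Lra.
Open Scope R_scope.

Fixpoint sum1 (f : nat -> R) (n : nat) : R :=
  match n with
  | O => 0
  | S k => sum1 f k + f (S k)
  end.

(* y^a for y >= 0 and a >= 1, with 0^a = 0 *)
Definition rpow0 (y a : R) : R := if Req_EM_T y 0 then 0 else Rpower y a.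

(* alpha in [1, infinity]: [Some a] is a finite alpha = a, [None] is alpha = infinity *)
Definition alpha_ok (alpha : option R) : Prop :=
  match alpha with Some a => 1 <= a | None => True end.

(* k1 |x - x*|^alpha, interpreted as 0 when alpha = infinity *)
Definition penalty (alpha : option R) (k1 y : R) : R :=
  match alpha with Some a => k1 * rpow0 (Rabs y) a | None => 0 end.

Definition concave_on01 (g : R -> R) : Prop :=
  forall x y t, 0 <= x <= 1 -> 0 <= y <= 1 -> 0 <= t <= 1 ->
    t * g x + (1 - t) * g y <= g (t * x + (1 - t) * y).

Definition nondecr_on01 (g : R -> R) : Prop :=
  forall x y, 0 <= x <= 1 -> 0 <= y <= 1 -> x <= y -> g x <= g y.

Definition assumption1 (g : R -> R) (xs eps : R) (alpha : option R) (k1 gp : R) : Prop :=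
  0 < eps /\ eps < Rmin xs (1 - xs) /\ alpha_ok alpha /\ 0 <= k1 /\ 0 <= gp /\
  (forall y, 0 <= y <= 1 -> g y <= g xs + gp * (y - xs)) /\
  (forall x, xs - eps <= x <= xs + eps ->
     g xs + gp * (x - xs) - penalty alpha k1 (x - xs) <= g x).

(* stock-dependent policy x_1..x_c with values in [0,1] *)
Definition policy (c : nat) (x : nat -> R) : Prop :=
  forall j, (1 <= j <= c)%nat -> 0 <= x j <= 1.

Definition two_price (c : nat) (x : nat -> R) : Prop :=
  exists xL xH (tau : nat), 0 <= xL <= 1 /\ 0 <= xH <= 1 /\ (1 <= tau <= c)%nat /\
    forall j, (1 <= j <= c)%nat -> x j = if Nat.leb j tau then xL else xH.

Definition steady_state (c : nat) (lam d : R) (x : nat -> R) (pi : nat -> R) : Prop :=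
  (forall j, (j <= c)%nat -> 0 <= pi j) /\
  pi O + sum1 pi c = 1 /\
  (forall j, (1 <= j <= c)%nat ->
     pi j * lam * x j = pi (j - 1)%nat * (INR c - INR j + 1) / d).

Definition avg_reward (c : nat) (lam : R) (g : R -> R) (x pi : nat -> R) : R :=
  sum1 (fun j => pi j * lam * g (x j)) c.

Definition perf_loss (c : nat) (lam : R) (g : R -> R) (xs : R) (x pi : nat -> R) : R :=
  lam * g xs - avg_reward c lam g x pi.

Definition loss_bound (alpha : option R) (K : R) (c : nat) : R :=
  match alpha with
  | Some a => K * Rpower (INR c) (1 / (a + 1)) * (ln (INR c)) ^ 2
  | None => K * (ln (INR c)) ^ 2
  end.

(* Main.v *)
Require Import Defs.
From Stdlib Require Import Reals Lra Lia ZArith.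
Open Scope R_scope.

Lemma exp_le x y : x <= y -> exp x <= exp y.
Proof. intros [H|H]; [left; apply exp_increasing; auto | subst; lra]. Qed.

Lemma ln_le' x y : 0 < x -> x <= y -> ln x <= ln y.
Proof. intros Hx [H|H]; [left; apply ln_increasing; auto | subst; lra]. Qed.

Lemma exp_pow x n : exp x ^ n = exp (INR n * x).
Proof. induction n; simpl pow. simpl; rewrite Rmult_0_l, exp_0; auto.
  rewrite IHn, S_INR, <- exp_plus. f_equal; ring. Qed.

Lemma sum1_ext f g n : (forall j, (1<=j<=n)%nat -> f j = g j) -> sum1 f n = sum1 g n.
Proof. induction n; intros H; simpl; auto. rewrite IHn, H; [auto|lia|intros; apply H; lia]. Qed.

Lemma sum1_le f g n : (forall j, (1<=j<=n)%nat -> f j <= g j) -> sum1 f n <= sum1 g n.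
Proof. induction n; intros H; simpl; [lra|]. assert (H1 := H (S n) ltac:(lia)).
  assert (sum1 f n <= sum1 g n) by (apply IHn; intros; apply H; lia). lra. Qed.

Lemma sum1_lin a b f g n : sum1 (fun j => a * f j + b * g j) n = a * sum1 f n + b * sum1 g n.
Proof. induction n; simpl; [ring|]. rewrite IHn; ring. Qed.

Lemma sum1_scal a f n : sum1 (fun j => a * f j) n = a * sum1 f n.
Proof. induction n; simpl; [ring|]. rewrite IHn; ring. Qed.

Lemma sum1_shift f n : sum1 (fun j => f (j-1)%nat) n = f 0%nat + sum1 f n - f n.
Proof. induction n; simpl; [ring|]. rewrite IHn, Nat.sub_0_r; ring. Qed.

Lemma sum1_nonneg f n : (forall j, (1<=j<=n)%nat -> 0 <= f j) -> 0 <= sum1 f n.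
Proof. intros H. apply Rle_trans with (sum1 (fun _ => 0) n).
  clear H; induction n; simpl; lra. apply sum1_le; auto. Qed.

Lemma sum1_ge_term f n j : (forall j, (1<=j<=n)%nat -> 0 <= f j) -> (1<=j<=n)%nat -> f j <= sum1 f n.
Proof. induction n; intros H Hj; [lia|]. simpl.
  destruct (Nat.eq_dec j (S n)) as [->|Hne].
  - assert (0 <= sum1 f n) by (apply sum1_nonneg; intros; apply H; lia). lra.
  - assert (f j <= sum1 f n) by (apply IHn; [intros; apply H; lia| lia]).
    assert (0 <= f (S n)) by (apply H; lia). lra. Qed.

Lemma nat_ceil r : 0 <= r -> exists n : nat, r < INR n <= r + 1.
Proof. intros Hr. destruct (archimed r) as [H1 H2].
  assert (0 < up r)%Z by (apply lt_0_IZR; lra).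
  exists (Z.to_nat (up r)). rewrite INR_IZR_INZ, Z2Nat.id by lia. lra. Qed.

Lemma ln_ge1 c : 3 <= c -> 1 <= ln c.
Proof. intros H. rewrite <- (ln_exp 1). apply ln_le'. apply exp_pos.
  pose proof exp_le_3. lra. Qed.

Lemma ln_le_2sqrt c : 1 <= c -> ln c <= 2 * sqrt c.
Proof. intros H. assert (Hs : 0 < sqrt c) by (apply sqrt_lt_R0; lra).
  rewrite <- (sqrt_sqrt c) at 1 by lra. rewrite ln_mult by auto.
  pose proof (exp_ineq1_le (ln (sqrt c))). rewrite exp_ln in H0 by auto. lra. Qed.
Lemma pi0_geom (pi : nat -> R) q tau : 0 <= q ->
  (forall j, (1<=j<=tau)%nat -> pi (j-1)%nat <= q * pi j) -> pi 0%nat <= q^tau * pi tau.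
Proof. intros Hq H.
  assert (forall k, (k <= tau)%nat -> pi 0%nat <= q^k * pi k).
  { induction k; intros Hk. simpl; lra.
    assert (A := IHk ltac:(lia)). assert (B := H (S k) ltac:(lia)).
    simpl in B; rewrite Nat.sub_0_r in B.
    assert (0 <= q^k) by (apply pow_le; auto).
    simpl. apply Rle_trans with (q^k * pi k); auto.
    replace (q * q^k * pi (S k)) with (q^k * (q * pi (S k))) by ring.
    apply Rmult_le_compat_l; auto. }
  apply H0; auto. Qed.

Lemma H_bound c tau d pi : 0 < d -> (forall j, (j<=c)%nat -> 0 <= pi j) ->
  pi 0%nat + sum1 pi c = 1 ->
  (forall j, (tau < j <= c)%nat -> (1+d) * pi j <= pi (j-1)%nat) ->
  sum1 (fun j => Rmax 0 (INR j - INR tau) * pi j) c <= / d.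
Proof. intros Hd Hpos Hsum Hhi.
  set (h := fun j => Rmax 0 (INR j - INR tau)).
  assert (Hh0 : forall j, 0 <= h j) by (intros; unfold h; apply Rmax_l).
  assert (P : forall j, (1<=j<=c)%nat -> (1+d) * (h j * pi j) <= 1 * (h (j-1)%nat * pi (j-1)%nat) + 1 * pi (j-1)%nat).
  { intros j Hj. destruct (le_lt_dec j tau) as [Hle|Hlt].
    - unfold h at 1. rewrite Rmax_left.
      2:{ apply le_INR in Hle; lra. }
      assert (0 <= pi (j-1)%nat) by (apply Hpos; lia).
      assert (0 <= h (j-1)%nat) by auto. nra.
    - assert (E : INR (j-1) = INR j - 1) by (rewrite minus_INR by lia; simpl; ring).
      assert (Hlt' : INR tau <= INR (j-1)) by (apply le_INR; lia).
      unfold h. rewrite (Rmax_right 0 (INR j - INR tau)), (Rmax_right 0 (INR (j-1) - INR tau)) by lra.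
      assert (A := Hhi j ltac:(lia)).
      assert (0 <= INR j - INR tau) by lra.
      rewrite E. nra. }
  apply sum1_le in P.
  rewrite (sum1_lin 1 1 (fun j => h (j-1)%nat * pi (j-1)%nat) (fun j => pi (j-1)%nat)) in P.
  rewrite (sum1_shift (fun i => h i * pi i)), (sum1_shift pi) in P.
  set (Hs := sum1 (fun j => h j * pi j) c) in *.
  assert (h 0%nat = 0) by (unfold h; simpl; apply Rmax_left; pose proof (pos_INR tau); lra).
  assert (0 <= h c * pi c) by (apply Rmult_le_pos; auto).
  assert (0 <= pi c) by auto.
  rewrite sum1_scal in P. fold Hs in P.
  rewrite H in P. assert (d * Hs <= 1) by (rewrite Rmult_plus_distr_r, Rmult_1_l in P; lra).
  change (Hs <= / d). apply Rmult_le_reg_l with d; auto. rewrite Rinv_r; lra. Qed.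
Fixpoint pp (c : nat) (lam d : R) (x : nat -> R) (j : nat) : R :=
  match j with
  | O => 1
  | S k => pp c lam d x k * (INR c - INR (S k) + 1) / (d * lam * x (S k))
  end.

Lemma pp_pos c lam d x j : 0 < lam -> 0 < d -> (forall j, (1<=j<=c)%nat -> 0 < x j) ->
  (j <= c)%nat -> 0 < pp c lam d x j.
Proof. intros Hl Hd Hx. induction j; intros Hj. simpl; lra. cbn [pp].
  assert (0 < x (S j)) by (apply Hx; lia).
  assert (INR (S j) <= INR c) by (apply le_INR; lia).
  apply Rdiv_lt_0_compat. apply Rmult_lt_0_compat. { apply IHj; lia. } lra.
  apply Rmult_lt_0_compat; auto. apply Rmult_lt_0_compat; auto. Qed.

Lemma ss_exists c lam d x : 0 < lam -> 0 < d -> (forall j, (1<=j<=c)%nat -> 0 < x j) ->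
  exists pi, steady_state c lam d x pi.
Proof. intros Hl Hd Hx.
  set (Z := pp c lam d x 0 + sum1 (pp c lam d x) c).
  assert (HZ : 0 < Z).
  { unfold Z. simpl pp. assert (0 <= sum1 (pp c lam d x) c); [|lra].
    apply sum1_nonneg. intros; left; apply pp_pos; auto; lia. }
  exists (fun j => / Z * pp c lam d x j). split; [|split].
  - intros j Hj. apply Rmult_le_pos. left; apply Rinv_0_lt_compat; auto.
    left; apply pp_pos; auto.
  - rewrite sum1_scal, <- Rmult_plus_distr_l. fold Z. field. lra.
  - intros j Hj. destruct j as [|k]; [lia|]. cbn [pp]. replace (S k - 1)%nat with k by lia.
    assert (0 < x (S k)) by (apply Hx; lia).
    field. repeat split; lra. Qed.

Lemma penalty_abs a k y : penalty a k y = penalty a k (Rabs y).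
Proof. destruct a; simpl; auto. rewrite Rabs_Rabsolu; auto. Qed.

Lemma penalty_nonneg a k y : 0 <= k -> 0 <= penalty a k y.
Proof. intros Hk. destruct a; simpl; [|lra]. apply Rmult_le_pos; auto.
  unfold rpow0. destruct (Req_EM_T (Rabs y) 0); [lra|]. unfold Rpower. left; apply exp_pos. Qed.
Lemma core xs d g eps alpha k1 gp c dl :
  0 < xs < 1 -> 0 < d -> nondecr_on01 g -> g 0 = 0 -> assumption1 g xs eps alpha k1 gp ->
  3 <= INR c -> 0 < dl -> dl <= 1/2 -> xs*dl <= eps -> 4 * ln (INR c) <= INR c * dl^2 ->
  exists x, two_price c x /\ (exists pi, steady_state c (INR c/(xs*d)) d x pi) /\
   forall pi, steady_state c (INR c/(xs*d)) d x pi ->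
    perf_loss c (INR c/(xs*d)) g xs x pi <=
      g xs/(xs*d) + INR c/(xs*d) * penalty alpha k1 (xs*dl) + gp/d * (2*ln (INR c)/dl + 1 + /dl).
Proof.
  intros Hxs Hd Hmono Hg0 [Heps [Hepsm [Hal [Hk1 [Hgp [Hup Hlow]]]]]] Hc Hdl Hdl2 Hdle HcL.
  set (C := INR c) in *. set (L := ln C) in *.
  assert (HL : 1 <= L) by (apply ln_ge1; auto).
  assert (Hem : eps < 1 - xs) by (pose proof (Rmin_r xs (1-xs)); lra).
  assert (H2L' : 0 < 2*L/dl) by (apply Rdiv_lt_0_compat; lra).
  assert (H2L : 0 <= 2*L/dl) by lra.
  destruct (nat_ceil (2*L/dl) H2L) as [tau [Ht1 Ht2]].
  assert (Hrat : 2*L/dl <= C*dl/2).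
  { apply (Rmult_le_reg_r (2*dl)); [lra|].
    replace (2*L/dl*(2*dl)) with (4*L) by (field; lra).
    replace (C*dl/2*(2*dl)) with (C*dl^2) by (field; lra). lra. }
  assert (Htau1 : (1 <= tau)%nat).
  { destruct tau; [simpl in Ht1; assert (0 < 2*L/dl) by (apply Rdiv_lt_0_compat; lra); lra|lia]. }
  assert (Htauc : (tau <= c)%nat). { apply INR_le. fold C. assert (C*dl/2 <= C/4) by nra. lra. }
  set (xL := xs*(1-dl)). set (xH := xs*(1+dl)).
  set (x := fun j => if Nat.leb j tau then xL else xH).
  set (lam := C/(xs*d)).
  assert (Hlam : 0 < lam) by (apply Rdiv_lt_0_compat; [lra| apply Rmult_lt_0_compat; lra]).
  assert (HxL : x = x) by reflexivity.
  exists x. split; [|split].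
  - exists xL, xH, tau. unfold xL, xH. repeat split; try nra; auto.
  - apply ss_exists; auto. intros j Hj. unfold x. destruct (Nat.leb j tau); unfold xL, xH; nra.
  - intros pi [Hpos [Hsum Hbal]].
    set (P := penalty alpha k1 (xs*dl)).
    assert (HP : 0 <= P) by (apply penalty_nonneg; auto).
    assert (Hrq : forall j, (1<=j<=c)%nat -> pi j * (C * (x j / xs)) = pi (j-1)%nat * (C - INR j + 1)).
    { intros j Hj. rewrite <- (Rmult_1_l (pi (j-1)%nat * _)).
      replace (pi (j-1)%nat * (C - INR j + 1)) with (d * (pi (j-1)%nat * (C - INR j + 1) / d)) by (field; lra).
      rewrite <- Hbal by auto. unfold lam. field. lra. }
    assert (Hhi : forall j, (tau < j <= c)%nat -> (1+dl) * pi j <= pi (j-1)%nat).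
    { intros j Hj. assert (E := Hrq j ltac:(lia)). unfold x in E.
      replace (Nat.leb j tau) with false in E by (symmetry; apply Nat.leb_gt; lia).
      unfold xH in E. replace (xs*(1+dl)/xs) with (1+dl) in E by (field; lra).
      assert (1 <= INR j) by (apply (le_INR 1); lia).
      assert (0 <= pi (j-1)%nat) by (apply Hpos; lia).
      assert (0 < C) by lra.
      apply (Rmult_le_reg_l C); auto. nra. }
    assert (Hlo : forall j, (1 <= j <= tau)%nat -> pi (j-1)%nat <= (1 - dl/2) * pi j).
    { intros j Hj. assert (E := Hrq j ltac:(lia)). unfold x in E.
      replace (Nat.leb j tau) with true in E by (symmetry; apply Nat.leb_le; lia).
      unfold xL in E. replace (xs*(1-dl)/xs) with (1-dl) in E by (field; lra).
      assert (INR j <= INR tau) by (apply le_INR; lia).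
      assert (0 <= pi (j-1)%nat) by (apply Hpos; lia).
      assert (0 <= pi j) by (apply Hpos; lia).
      assert (0 < C) by lra.
      assert (A : pi (j-1)%nat * (C * (1 - dl/2)) <= pi j * (C * (1-dl))) by nra.
      assert (B : pi (j-1)%nat * (1 - dl/2) <= pi j * (1-dl/2)^2).
      { apply (Rmult_le_reg_l C); auto. nra. }
      apply (Rmult_le_reg_r (1 - dl/2)); [lra|]. nra. }
    assert (Hpi0 : pi 0%nat <= / C).
    { assert (G := pi0_geom pi (1-dl/2) tau ltac:(lra) Hlo).
      assert (Hpt : pi tau <= 1).
      { assert (pi tau <= sum1 pi c) by (apply sum1_ge_term; [intros; apply Hpos; lia| lia]).
        assert (0 <= pi 0%nat) by (apply Hpos; lia). lra. }
      assert (Hq : (1-dl/2)^tau <= exp (-(dl/2))^tau).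
      { apply pow_incr. split; [lra|]. pose proof (exp_ineq1_le (-(dl/2))). lra. }
      rewrite exp_pow in Hq.
      assert (Hq2 : exp (INR tau * - (dl/2)) <= / C).
      { rewrite <- (exp_ln C) by lra. rewrite <- exp_Ropp. apply exp_le. fold L.
        assert (2*L/dl*dl = 2*L) by (field; lra).
        assert (2*L/dl*dl <= INR tau * dl) by (apply Rmult_le_compat_r; lra). lra. }
      assert (0 <= (1-dl/2)^tau) by (apply pow_le; lra).
      assert (0 <= pi tau) by (apply Hpos; lia).
      assert ((1-dl/2)^tau * pi tau <= (1-dl/2)^tau) by nra. lra. }
    set (EJ := sum1 (fun j => INR j * pi j) c).
    set (S := sum1 pi c).
    assert (HEJ : EJ <= INR tau + / dl).
    { assert (Hb := H_bound c tau dl pi Hdl Hpos Hsum Hhi).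
      assert (EJ <= INR tau * S + 1 * sum1 (fun j => Rmax 0 (INR j - INR tau) * pi j) c).
      { unfold EJ, S. rewrite <- sum1_lin. apply sum1_le. intros j Hj.
        assert (0 <= pi j) by (apply Hpos; lia).
        pose proof (Rmax_r 0 (INR j - INR tau)). nra. }
      assert (0 <= pi 0%nat) by (apply Hpos; lia).
      assert (0 <= INR tau) by apply pos_INR. unfold S in *. nra. }
    assert (HT : sum1 (fun j => pi j * lam * x j) c = (C - EJ) / d).
    { rewrite (sum1_ext _ (fun j => / d * (fun i => pi i * (C - INR i)) (j-1)%nat)).
      2:{ intros j Hj. rewrite Hbal by auto. rewrite minus_INR by lia. fold C. change (INR 1) with 1. field. lra. }
      rewrite sum1_scal, (sum1_shift (fun i => pi i * (C - INR i))).
      rewrite (sum1_ext _ (fun i => C * pi i + (-1) * (INR i * pi i))) by (intros; ring).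
      rewrite sum1_lin. fold EJ. fold S. simpl INR. fold C.
      replace S with (1 - pi 0%nat) by (unfold S; lra). field. lra. }
    assert (HR : (lam * g xs - lam * P - gp * C / d) * S + gp * sum1 (fun j => pi j * lam * x j) c
                 <= avg_reward c lam g x pi).
    { unfold S, avg_reward. rewrite <- sum1_lin. apply sum1_le. intros j Hj.
      assert (0 <= pi j) by (apply Hpos; lia).
      assert (Hxj : penalty alpha k1 (x j - xs) = P /\ xs - eps <= x j <= xs + eps).
      { unfold P; rewrite (penalty_abs _ _ (x j - xs)), (penalty_abs _ _ (xs*dl)).
        unfold x, xL, xH; destruct (Nat.leb j tau).
        - replace (xs*(1-dl) - xs) with (-(xs*dl)) by ring. rewrite Rabs_Ropp. split; [auto|nra].
        - replace (xs*(1+dl) - xs) with (xs*dl) by ring. split; [auto|nra]. }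
      destruct Hxj as [Hpen Hxj].
      assert (Hl := Hlow (x j) Hxj). rewrite Hpen in Hl.
      assert (E : (lam * g xs - lam * P - gp * C / d) * pi j + gp * (pi j * lam * x j)
                 = pi j * lam * (g xs + gp * (x j - xs) - P)) by (unfold lam; field; lra).
      rewrite E. apply Rmult_le_compat_l; [nra|auto]. }
    rewrite HT in HR. replace S with (1 - pi 0%nat) in HR by (unfold S; lra).
    fold lam. unfold perf_loss. fold P.
    assert (Hgx : 0 <= g xs) by (rewrite <- Hg0; apply Hmono; lra).
    assert (Hp0 : 0 <= pi 0%nat) by (apply Hpos; lia).
    assert (A1 : lam * g xs * pi 0%nat <= g xs / (xs*d)).
    { apply Rle_trans with (lam * g xs * / C). apply Rmult_le_compat_l; [nra|auto].
      right; unfold lam; field; repeat split; lra. }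
    assert (A2 : 0 <= lam * P * pi 0%nat) by (apply Rmult_le_pos; nra).
    assert (Hgd : 0 <= gp / d) by (unfold Rdiv; apply Rmult_le_pos; [lra|left; apply Rinv_0_lt_compat; lra]).
    assert (A3 : 0 <= gp / d * C * pi 0%nat) by (apply Rmult_le_pos; nra).
    assert (A4 : gp / d * EJ <= gp / d * (2*L/dl + 1 + /dl)) by (apply Rmult_le_compat_l; lra).
    assert (E1 : gp * ((C - EJ)/d) = gp/d*C - gp/d*EJ) by (field; lra).
    assert (E2 : gp * C / d = gp/d*C) by (field; lra).
    rewrite E1, E2 in HR. nra.
Qed.
Lemma threshold m C : 0 < m -> Rmax 3 ((8/m)^2) <= C -> 3 <= C /\ 4 * ln C / C <= m.
Proof. intros Hm H. pose proof (Rmax_l 3 ((8/m)^2)). pose proof (Rmax_r 3 ((8/m)^2)).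
  split; [lra|].
  assert (Hs : 8/m <= sqrt C).
  { rewrite <- (sqrt_pow2 (8/m)). apply sqrt_le_1_alt. lra.
    left; apply Rdiv_lt_0_compat; lra. }
  assert (HsC := sqrt_sqrt C ltac:(lra)).
  assert (Hsp : 0 < sqrt C) by (apply sqrt_lt_R0; lra).
  assert (HL := ln_le_2sqrt C ltac:(lra)).
  assert (8 <= m * sqrt C).
  { apply (Rmult_le_reg_r (/m)). apply Rinv_0_lt_compat; lra.
    replace (m * sqrt C * / m) with (sqrt C) by (field; lra). lra. }
  apply (Rmult_le_reg_r C). lra. replace (4 * ln C / C * C) with (4 * ln C) by (field; lra).
  nra. Qed.
Theorem theorem2 (xs d : R) (g : R -> R) (eps : R) (alpha : option R) (k1 gp : R) :
  0 < xs < 1 -> 0 < d ->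
  concave_on01 g -> nondecr_on01 g -> g 0 = 0 ->
  assumption1 g xs eps alpha k1 gp -> 0 < gp ->
  exists K c0 : R, 0 < K /\
    forall c : nat, c0 <= INR c -> (1 <= c)%nat ->
      let lam := INR c / (xs * d) in
      exists x : nat -> R, two_price c x /\
        (exists pi, steady_state c lam d x pi) /\
        forall pi, steady_state c lam d x pi ->
          perf_loss c lam g xs x pi <= loss_bound alpha K c.
Proof.
  intros Hxs Hd Hconc Hmono Hg0 HA Hgp.
  pose proof HA as [Heps [Hepsm [Hal [Hk1 [Hgp0 _]]]]].
  assert (Hem : eps < xs) by (pose proof (Rmin_l xs (1-xs)); lra).
  set (d0 := Rmin (eps/xs) (1/2)).
  assert (Hd0 : 0 < d0) by (unfold d0; apply Rmin_glb_lt; [apply Rdiv_lt_0_compat|]; lra).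
  assert (Hd0h : d0 <= 1/2) by (apply Rmin_r).
  assert (Hd0e : xs * d0 <= eps).
  { assert (d0 <= eps/xs) by apply Rmin_l.
    apply Rle_trans with (xs * (eps/xs)). apply Rmult_le_compat_l; lra. right; field; lra. }
  assert (Hgx : 0 <= g xs) by (rewrite <- Hg0; apply Hmono; lra).
  set (A := g xs / (xs*d)).
  assert (HAp : 0 <= A) by (unfold A; apply Rmult_le_pos; [auto| left; apply Rinv_0_lt_compat; nra]).
  set (B := gp / d).
  assert (HB : 0 <= B) by (unfold B; apply Rmult_le_pos; [lra| left; apply Rinv_0_lt_compat; lra]).
  destruct alpha as [a|].
  -
    simpl in Hal.
    set (m := Rpower d0 (a+1)).
    assert (Hm : 0 < m) by (unfold m, Rpower; apply exp_pos).
    assert (Hlnd0 : ln d0 < 0) by (rewrite <- ln_1; apply ln_increasing; lra).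
    assert (Hm1 : ln m = (a+1) * ln d0) by (unfold m, Rpower; rewrite ln_exp; auto).
    set (Q := k1 * Rpower xs a / (xs*d)).
    assert (HQ : 0 <= Q).
    { unfold Q; apply Rmult_le_pos. apply Rmult_le_pos; auto. unfold Rpower; left; apply exp_pos.
      left; apply Rinv_0_lt_compat; nra. }
    exists (A + 4*Q + 4*B + 1), (Rmax 3 ((8/m)^2)). split; [lra|].
    intros c Hc0 Hc1 lam.
    destruct (threshold m (INR c) Hm Hc0) as [Hc3 Hu].
    set (C := INR c) in *. set (L := ln C) in *.
    assert (HL : 1 <= L) by (apply ln_ge1; auto).
    set (u := 4 * L / C) in *.
    assert (Hu0 : 0 < u) by (unfold u; apply Rdiv_lt_0_compat; lra).
    assert (HlnL : 0 <= ln (4*L)) by (rewrite <- ln_1; apply ln_le'; lra).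
    assert (Hlnu : ln u = ln (4*L) - ln C).
    { unfold u, Rdiv. rewrite ln_mult, ln_Rinv; try lra. apply Rinv_0_lt_compat; lra. }
    assert (Hlnu2 : ln u <= (a+1) * ln d0) by (rewrite <- Hm1; apply ln_le'; auto).
    assert (Hlnu0 : ln u <= 0) by nra.
    set (dl := exp (ln u / (a+1))).
    assert (Hdl : 0 < dl) by apply exp_pos.
    assert (Hdld0 : dl <= d0).
    { unfold dl. rewrite <- (exp_ln d0) by auto. apply exp_le.
      apply (Rmult_le_reg_r (a+1)); [lra|]. replace (ln u / (a+1) * (a+1)) with (ln u) by (field; lra). lra. }
    assert (Hdl2 : 4 * L <= C * dl^2).
    { assert (E : dl^2 = exp (2 * ln u / (a+1))).
      { unfold dl. simpl. rewrite Rmult_1_r, <- exp_plus. f_equal. field. lra. }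
      assert (u <= dl^2).
      { rewrite E. rewrite <- (exp_ln u) at 1 by auto. apply exp_le.
        assert (2 * ln u / (a+1) - ln u = ln u * (1 - a) / (a+1)) by (field; lra).
        assert (0 <= ln u * (1-a) / (a+1)).
        { unfold Rdiv; apply Rmult_le_pos; [nra| left; apply Rinv_0_lt_compat; lra]. }
        lra. }
      assert (C * u = 4 * L) by (unfold u; field; lra). nra. }
    destruct (core xs d g eps (Some a) k1 gp c dl Hxs Hd Hmono Hg0 HA Hc3 Hdl ltac:(lra)
               ltac:(apply Rle_trans with (xs*d0); [apply Rmult_le_compat_l; lra| auto]) Hdl2)
      as [x [Htp [Hex Hloss]]].
    exists x. split; [auto|split; [auto|]].
    intros pi Hss. eapply Rle_trans; [apply Hloss; auto|]. fold C L A B.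
    set (Pc := exp (/ (a+1) * ln C)).
    assert (HPc : 1 <= Pc).
    { unfold Pc. apply Rle_trans with (exp 0); [rewrite exp_0; lra|]. apply exp_le. apply Rmult_le_pos.
      left; apply Rinv_0_lt_compat; lra. rewrite <- ln_1; apply ln_le'; lra. }
    assert (Hidl : / dl <= Pc).
    { unfold dl, Pc. rewrite <- exp_Ropp. apply exp_le.
      apply (Rmult_le_reg_r (a+1)); [lra|].
      replace (- (ln u / (a+1)) * (a+1)) with (- ln u) by (field; lra).
      replace (/ (a+1) * ln C * (a+1)) with (ln C) by (field; lra). lra. }
    assert (Hpen : C / (xs*d) * penalty (Some a) k1 (xs*dl) <= Q * (Pc * (4*L))).
    { simpl. unfold rpow0. rewrite Rabs_right by nra.
      destruct (Req_EM_T (xs*dl) 0) as [Hz|Hz]; [nra|].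
      unfold Rpower. rewrite ln_mult by lra.
      assert (E : C / (xs*d) * (k1 * exp (a * (ln xs + ln dl)))
                  = Q * (C * exp (a * ln dl))).
      { unfold Q, Rpower. rewrite Rmult_plus_distr_l, exp_plus. field. nra. }
      rewrite E. apply Rmult_le_compat_l; auto.
      assert (E2 : C * exp (a * ln dl) = Pc * exp (a / (a+1) * ln (4*L))).
      { unfold Pc, dl. rewrite ln_exp, <- exp_plus.
        rewrite <- (exp_ln C) at 1 by lra. rewrite <- exp_plus. f_equal.
        rewrite Hlnu. field. lra. }
      rewrite E2. apply Rmult_le_compat_l; [lra|].
      rewrite <- (exp_ln (4*L)) at 2 by lra. apply exp_le.
      assert (a/(a+1) <= 1) by (apply (Rmult_le_reg_r (a+1)); [lra|]; replace (a/(a+1)*(a+1)) with a by (field; lra); lra).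
      nra. }
    unfold loss_bound. fold C L. unfold Rpower. fold Pc.
    replace (1/(a+1)) with (/(a+1)) by (field; lra). fold Pc.
    assert (H2 : 2 * L / dl <= 2 * L * Pc) by (unfold Rdiv; nra).
    assert (LL : L <= L^2) by (simpl; nra).
    assert (W1 : Pc * L <= Pc * L^2) by (apply Rmult_le_compat_l; lra).
    assert (W2 : Pc <= Pc * L) by (rewrite <- (Rmult_1_r Pc) at 1; apply Rmult_le_compat_l; lra).
    assert (W3 : 1 <= Pc) by lra.
    assert (X1 : Q * (Pc * (4*L)) <= 4 * Q * (Pc * L^2)) by nra.
    assert (X2 : B * (2 * L / dl) <= 2 * B * (Pc * L^2)) by nra.
    assert (X3 : B * / dl <= B * (Pc * L^2)) by nra.
    assert (X4 : B <= B * (Pc * L^2)) by nra.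
    assert (X5 : A <= A * (Pc * L^2)) by nra.
    assert (X6 : 0 < Pc * L^2) by nra.
    replace ((A + 4 * Q + 4 * B + 1) * Pc * L ^ 2) with
      (A * (Pc*L^2) + 4*Q*(Pc*L^2) + 2*B*(Pc*L^2) + B*(Pc*L^2) + B*(Pc*L^2) + 1 * (Pc*L^2)) by ring.
    replace (B * (2 * L / dl + 1 + / dl)) with (B * (2*L/dl) + B * /dl + B) by ring.
    lra.
  -
    set (m := d0^2).
    assert (Hm : 0 < m) by (unfold m; nra).
    exists (A + B * (3 / d0 + 1) + 1), (Rmax 3 ((8/m)^2)).
    assert (0 <= B * (3/d0 + 1)).
    { apply Rmult_le_pos; auto. assert (0 < 3/d0) by (apply Rdiv_lt_0_compat; lra). lra. }
    split; [lra|].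
    intros c Hc0 Hc1 lam.
    destruct (threshold m (INR c) Hm Hc0) as [Hc3 Hu].
    set (C := INR c) in *. set (L := ln C) in *.
    assert (HL : 1 <= L) by (apply ln_ge1; auto).
    assert (Hdl2 : 4 * L <= C * d0^2).
    { apply (Rmult_le_reg_r (/C)). apply Rinv_0_lt_compat; lra.
      replace (C * d0^2 * /C) with (d0^2) by (field; lra). fold m. unfold Rdiv in Hu. lra. }
    destruct (core xs d g eps None k1 gp c d0 Hxs Hd Hmono Hg0 HA Hc3 Hd0 Hd0h Hd0e Hdl2)
      as [x [Htp [Hex Hloss]]].
    exists x. split; [auto|split; [auto|]].
    intros pi Hss. eapply Rle_trans; [apply Hloss; auto|]. fold C L A B.
    unfold loss_bound. fold C L. simpl penalty.
    assert (Hi : 0 < / d0) by (apply Rinv_0_lt_compat; lra).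
    replace (3/d0) with (3 * /d0) by (unfold Rdiv; ring).
    set (e := / d0) in *. replace (2 * L / d0) with (2 * L * e) by (unfold e, Rdiv; ring).
    assert (LL : L <= L^2) by (simpl; nra).
    assert (Be : 0 <= B * e) by nra.
    assert (X1 : B * e * L <= B * e * L^2) by (apply Rmult_le_compat_l; lra).
    assert (X2 : B * e <= B * e * L^2) by nra.
    assert (X3 : B <= B * L^2) by nra.
    assert (X4 : A <= A * L^2) by nra.
    replace ((A + B * (3 * e + 1) + 1) * L^2) with
      (A * L^2 + 2 * (B*e*L^2) + B*e*L^2 + B*L^2 + L^2) by ring.
    replace (B * (2 * L * e + 1 + e)) with (2 * (B*e*L) + B*e + B) by ring.
    nra.
Qed.
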